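(* Let $n\ge 2$. An identity $w=w'$ (with $w,w'\in X^*$) holds in the monoid $\mathrm{Styl}_n$ if and only if the words $w$ and $w'$ have the same set of scattered subwords of length at most $n$.
   Context: A monoid identity $w=w'$ with $w,w'$ in the free monoid $X^*$ holds in a monoid $M$ if $w\varphi=w'\varphi$ for every homomorphism $\varphi\colon X^*\to M$. The stylic monoid $\mathrm{Styl}_n$ is generated by $a_1,\dots,a_n$ subject to: $a_i^2=a_i$ ($1\le i\le n$); $a_ja_ia_k=a_ja_ka_i$ and $a_ia_ka_j=a_ka_ia_j$ for $1\le i<j<k\le n$; $a_ja_ia_i=a_ia_ja_i$ and $a_ja_ja_i=a_ja_ia_j$ for $1\le i<j\le n$. A word $x_1\cdots x_k$ with $x_1,\dots,x_k\in X$ is a scattered subword of length $k$ of $v\in X^*$ if there exist $v_0,\dots,v_k\in X^*$ with $v=v_0x_1v_1\cdots v_{k-1}x_kv_k$. *)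

(* Defs.v *)
From mathcomp Require Import all_boot.
Set Implicit Arguments. Unset Strict Implicit. Unset Printing Implicit Defensive.

(* The stylic monoid Styl_n is presented by generators a_1..a_n, which we
   index by 'I_n (a_i is the ordinal i-1, the order on indices is preserved). *)

Definition styl_rel (n : nat) (l r : seq 'I_n) : Prop :=
  (exists i : 'I_n, l = [:: i; i] /\ r = [:: i])
  \/ (exists i j k : 'I_n, (i < j < k)%N /\
        ((l = [:: j; i; k] /\ r = [:: j; k; i]) \/
         (l = [:: i; k; j] /\ r = [:: k; i; j])))
  \/ (exists i j : 'I_n, (i < j)%N /\
        ((l = [:: j; i; i] /\ r = [:: i; j; i]) \/
         (l = [:: j; j; i] /\ r = [:: j; i; j]))).

Inductive styl_cong (n : nat) : seq 'I_n -> seq 'I_n -> Prop :=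
| styl_step : forall u v l r, styl_rel l r -> styl_cong (u ++ l ++ v) (u ++ r ++ v)
| styl_refl : forall w, styl_cong w w
| styl_sym : forall w w', styl_cong w w' -> styl_cong w' w
| styl_trans : forall w1 w2 w3, styl_cong w1 w2 -> styl_cong w2 w3 -> styl_cong w1 w3.

(* Styl_n is the quotient of the free monoid seq 'I_n by styl_cong.  A monoid
   homomorphism phi : X^* -> Styl_n is determined by the images of the letters,
   i.e. by a representative word phi x for each letter x; the image of a word w
   is then the class of flatten (map phi w). *)
Definition holds_in_styl (n : nat) (X : Type) (w w' : seq X) : Prop :=
  forall phi : X -> seq 'I_n,
    styl_cong (flatten (map phi w)) (flatten (map phi w')).

Definition same_subwords_upto (X : eqType) (k : nat) (w w' : seq X) : Prop :=
  forall u : seq X, size u <= k -> subseq u w = subseq u w'.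

(* Main.v *)
Require Import Defs.
From mathcomp Require Import all_boot.
From mathcomp Require Import zify.
From Stdlib Require Import Setoid Morphisms.
Set Implicit Arguments. Unset Strict Implicit. Unset Printing Implicit Defensive.

Lemma cong_ctx n (p s u v : seq 'I_n) : styl_cong u v -> styl_cong (p ++ u ++ s) (p ++ v ++ s).
Proof.
elim=> [u0 v0 l r H|w|w w' _ IH|w1 w2 w3 _ IH1 _ IH2].
- have -> : p ++ (u0 ++ l ++ v0) ++ s = (p ++ u0) ++ l ++ (v0 ++ s) by rewrite !catA.
  have -> : p ++ (u0 ++ r ++ v0) ++ s = (p ++ u0) ++ r ++ (v0 ++ s) by rewrite !catA.
  exact: styl_step.
- exact: styl_refl.
- exact: styl_sym.
- exact: styl_trans IH2.
Qed.

Add Parametric Relation n : (seq 'I_n) (@styl_cong n)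
  reflexivity proved by (@styl_refl n)
  symmetry proved by (@styl_sym n)
  transitivity proved by (@styl_trans n) as styl_setoid.

#[export] Instance cat_mor n : Proper (@styl_cong n ==> @styl_cong n ==> @styl_cong n) (@cat 'I_n).
Proof.
move=> x y Hxy x' y' Hx'.
apply: (@styl_trans _ _ (y ++ x')).
  exact: (cong_ctx [::] x' Hxy).
by rewrite -(cats0 x') -(cats0 y'); apply: cong_ctx.
Qed.

#[export] Instance cons_mor n (a : 'I_n) : Proper (@styl_cong n ==> @styl_cong n) (cons a).
Proof. by move=> x y H; rewrite -[a :: x]cats0 -[a :: y]cats0; apply: (cong_ctx [:: a] [::] H). Qed.

Lemma rel_cong n (l r s : seq 'I_n) : styl_rel l r -> styl_cong (l ++ s) (r ++ s).
Proof. by move=> H; have := styl_step [::] s H. Qed.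

Lemma L_ii n (i : 'I_n) s : styl_cong [:: i, i & s] (i :: s).
Proof. apply: (rel_cong (l:=[:: i; i]) (r:=[:: i])); left; by exists i. Qed.

Lemma L_jik n (i j k : 'I_n) s : i < j -> j < k ->
  styl_cong [:: j, i, k & s] [:: j, k, i & s].
Proof.
move=> h1 h2; apply: (rel_cong (l:=[:: j; i; k]) (r:=[:: j; k; i])).
right; left; exists i, j, k; split; [by rewrite h1 h2| by left].
Qed.

Lemma L_ikj n (i j k : 'I_n) s : i < j -> j < k ->
  styl_cong [:: i, k, j & s] [:: k, i, j & s].
Proof.
move=> h1 h2; apply: (rel_cong (l:=[:: i; k; j]) (r:=[:: k; i; j])).
right; left; exists i, j, k; split; [by rewrite h1 h2| by right].
Qed.

Lemma L_jii n (i j : 'I_n) s : i < j -> styl_cong [:: j, i, i & s] [:: i, j, i & s].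
Proof.
move=> h1; apply: (rel_cong (l:=[:: j; i; i]) (r:=[:: i; j; i])).
right; right; exists i, j; split; [exact: h1 | by left].
Qed.

Lemma L_jji n (i j : 'I_n) s : i < j -> styl_cong [:: j, j, i & s] [:: j, i, j & s].
Proof.
move=> h1; apply: (rel_cong (l:=[:: j; j; i]) (r:=[:: j; i; j])).
right; right; exists i, j; split; [exact: h1 | by right].
Qed.

Lemma L_iji n (i j : 'I_n) s : i < j -> styl_cong [:: i, j, i & s] [:: j, i & s].
Proof. move=> h; rewrite -L_jii //; rewrite L_ii; reflexivity. Qed.

Lemma L_jij n (i j : 'I_n) s : i < j -> styl_cong [:: j, i, j & s] [:: j, i & s].
Proof. move=> h; rewrite -L_jji //; rewrite L_ii; reflexivity. Qed.

Definition gtI n : rel 'I_n := fun x y => y < x.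

Lemma gtI_trans n : ssrbool.transitive (@gtI n).
Proof. by move=> y x z; rewrite /gtI => h1 h2; apply: ltn_trans h2 h1. Qed.

Lemma R2 n (T : seq 'I_n) (s a : 'I_n) r : path (@gtI n) s T -> s < a ->
  styl_cong (s :: T ++ a :: r) [:: s, a & T ++ r].
Proof.
elim: T s => [|t T IH] s /=; first by reflexivity.
move=> /andP[hts hp] hsa.
rewrite (IH t hp (ltn_trans hts hsa)).
exact: L_jik.
Qed.

Lemma R1 n (D : seq 'I_n) (x : 'I_n) r : path (@gtI n) x D ->
  styl_cong (x :: D ++ x :: r) (x :: D ++ r).
Proof.
case: D => [|d D] /=; first by move=> _; exact: L_ii.
move=> /andP[hdx hp]; rewrite (R2 r hp hdx); exact: L_jij.
Qed.

Lemma R1' n (H : seq 'I_n) (x : 'I_n) r : sorted (@gtI n) H -> all (fun h : 'I_n => x < h) H ->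
  styl_cong (x :: H ++ x :: r) (H ++ x :: r).
Proof.
elim: H => [|h H IH] /=; first by move=> _ _; exact: L_ii.
case: H IH => [|h2 H] IH /=.
  by move=> _ /andP[hx _]; exact: L_iji.
move=> /andP[h12 hs] /and3P[hxh hxh2 ha].
rewrite L_ikj //; apply: cons_mor; apply: IH => //=; by rewrite hxh2.
Qed.

Lemma R3 n (H : seq 'I_n) (q y : 'I_n) r : sorted (@gtI n) H -> all (fun h : 'I_n => y < h) H -> q < y ->
  styl_cong (H ++ [:: q, y & r]) (q :: H ++ y :: r).
Proof.
elim: H => [|h H IH] /=; first by reflexivity.
move=> hs /andP[hyh ha] hqy.
have hs' : sorted (@gtI n) H by case: H hs {IH ha} => //= ? ? /andP[].
rewrite (IH hs' ha hqy).
case: H hs hs' ha {IH} => [|h2 H] /=.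
  by move=> _ _ _; symmetry; apply: L_ikj.
move=> /andP[h12 _] _ /andP[hy2 _].
symmetry; apply: L_ikj => //; exact: ltn_trans hqy hy2.
Qed.

Lemma DD n (t : seq 'I_n) r : sorted (@gtI n) t -> styl_cong (t ++ t ++ r) (t ++ r).
Proof.
elim: t => [|d t IH] /=; first by reflexivity.
move=> hp; rewrite (R1 (t ++ r) hp).
have hs : sorted (@gtI n) t by case: t hp {IH} => //= ? ? /andP[].
by rewrite (IH hs); reflexivity.
Qed.

Fixpoint ins n (Q : seq 'I_n) (a : 'I_n) : seq 'I_n :=
  match Q with
  | [::] => [:: a]
  | h :: t => if a < h then h :: ins t a else if a == h then Q else a :: t
  end.

Definition P n (w : seq 'I_n) := foldl (@ins n) [::] w.

Lemma P_rcons n (w : seq 'I_n) a : P (rcons w a) = ins (P w) a.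
Proof. by rewrite /P foldl_rcons. Qed.

Lemma ins_mem1 n (Q : seq 'I_n) a x : x \in ins Q a -> (x == a) || (x \in Q).
Proof.
elim: Q => [|h t IH] /=; first by rewrite inE => ->.
case: ifP => _.
  by rewrite !inE => /orP[->|/IH/orP[->|->]]; rewrite ?orbT ?orTb.
case: ifP => _; first by move=> ->; rewrite orbT.
by rewrite !inE => /orP[->|->]; rewrite ?orbT ?orTb.
Qed.

Lemma sorted_consE n (h : 'I_n) t : sorted (@gtI n) (h :: t) = all (fun y : 'I_n => y < h) t && sorted (@gtI n) t.
Proof. by rewrite /= (path_sortedE (@gtI_trans n)). Qed.

Lemma ins_sorted n (Q : seq 'I_n) a : sorted (@gtI n) Q -> sorted (@gtI n) (ins Q a).
Proof.
elim: Q => [|h t IH] //=.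
rewrite -/(sorted _ (h :: t)) sorted_consE => /andP[ha hs].
case: ifPn => hah.
  rewrite sorted_consE (IH hs) andbT; apply/allP => x /ins_mem1 /orP[/eqP->//|].
  by move/allP: ha; apply.
case: ifPn => heq; first by rewrite sorted_consE ha hs.
rewrite sorted_consE hs andbT; apply/allP => x hx.
have := allP ha x hx.
move=> hxh; rewrite -leqNgt in hah.
exact: leq_trans hxh hah.
Qed.

Lemma mem_ins n (Q : seq 'I_n) a x : sorted (@gtI n) Q ->
  (x \in ins Q a) = (x == a) || ((x \in Q) && ((a < x) || has (fun y : 'I_n => (x < y) && (y <= a)) Q)).
Proof.
elim: Q => [|h t IH] /=; first by rewrite inE orbF.
rewrite -/(sorted _ (h :: t)) sorted_consE => /andP[ha hs].
have xt_lt : x \in t -> x < h by move=> xt; exact: (allP ha x xt).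
case: ifPn => hah.
  rewrite inE (IH hs) inE.
  have -> : (x < h) && (h <= a) = false by rewrite (leqNgt h a) hah andbF.
  case: (x =P h) => [->|hne] /=; first by rewrite hah !orbT.
  by [].
case: ifPn => heq.
  move/eqP: heq => ->; rewrite !inE leqnn.
  case: (x =P h) => [->|hne] //=.
  case xt: (x \in t) => //=; by rewrite (xt_lt xt) !orbT.
rewrite -leqNgt in hah.
rewrite !inE.
case: (x =P a) => [//|hxa] /=.
case: (x =P h) => [exh|hxh] /=.
  subst x.
  have ht : (h \in t) = false by apply/negP => /xt_lt; rewrite ltnn.
  rewrite ht ltnn /=.
  rewrite (ltnNge a h) hah /=.
  apply/esym/hasPn => y yt; apply/negP => /andP[hy _].
  by have := allP ha y yt; rewrite ltnNge (ltnW hy).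
case xt: (x \in t) => //=.
by rewrite (xt_lt xt) hah !orbT.
Qed.

Lemma ins_id n (Q : seq 'I_n) a : sorted (@gtI n) Q -> a \in Q -> ins Q a = Q.
Proof.
elim: Q => [|h t IH] //=.
rewrite -/(sorted _ (h :: t)) sorted_consE => /andP[ha hs].
rewrite inE; case: ifPn => hah.
  by case/orP=> [/eqP e|ain]; [by rewrite e ltnn in hah | rewrite IH].
case: ifPn => // heq /orP[//|ain].
by have := allP ha a ain; rewrite (negbTE hah).
Qed.

Lemma P_sorted n (w : seq 'I_n) : sorted (@gtI n) (P w).
Proof.
elim/last_ind: w => [|w a IH] //; rewrite P_rcons; exact: ins_sorted.
Qed.

Lemma P_mem n (w : seq 'I_n) x : x \in P w -> x \in w.
Proof.
elim/last_ind: w => [|w a IH] //; rewrite P_rcons => /ins_mem1.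
by rewrite mem_rcons inE => /orP[->//|/IH->]; rewrite orbT.
Qed.

Lemma C1 n (w : seq 'I_n) (c : nat) x : x \in P w -> x <= c ->
  x \in P (filter (fun y : 'I_n => y <= c) w).
Proof.
elim/last_ind: w x => [|w a IH] x //.
rewrite filter_rcons P_rcons mem_ins ?P_sorted //.
case: ifPn => hac; first rewrite P_rcons mem_ins ?P_sorted //.
  case/orP=> [->//|/andP[xS]].
  move=> /orP[hax|/hasP[y yS /andP[hxy hya]]] hxc.
    by rewrite (IH _ xS hxc) hax orbT.
  rewrite (IH _ xS hxc) /=; apply/orP; right; apply/orP; right.
  apply/hasP; exists y => //; last by rewrite hxy hya.
  by apply: IH => //; apply: leq_trans hya hac.
case/orP=> [/eqP->|/andP[xS _]] hxc; last exact: IH.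
by rewrite hxc in hac.
Qed.

Lemma ins_cat n (H R : seq 'I_n) (a : 'I_n) : all (fun h : 'I_n => a < h) H -> ins (H ++ R) a = H ++ ins R a.
Proof. by elim: H => [|h H IH] //= /andP[-> /IH->]. Qed.

Lemma split_lemma n (Q : seq 'I_n) (a : 'I_n) :
  all (fun h : 'I_n => a < h) Q \/
  exists H x T, Q = H ++ x :: T /\ all (fun h : 'I_n => a < h) H /\ x <= a.
Proof.
elim: Q => [|h t IH]; first by left.
case: (ltnP a h) => hah.
  case: IH => [hl|[H [x [T [-> [hH hx]]]]]]; first by left; rewrite /= hah.
  by right; exists (h :: H), x, T; rewrite /= hah hH.
by right; exists [::], h, t.
Qed.

Lemma P_head n (w : seq 'I_n) (b : 'I_n) : all (fun y : 'I_n => y <= b) w -> b \in w ->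
  exists D, P w = b :: D.
Proof.
elim/last_ind: w => [|w a IH] //.
rewrite all_rcons mem_rcons inE => /andP[hab hw].
case bw: (b \in w).
  move=> _; case: (IH hw bw) => D hD; rewrite P_rcons hD /=.
  case: ifP => hlt; first by eexists.
  case: eqP => [_|hne]; first by eexists.
  exfalso; apply: hne; apply: val_inj; apply/eqP; by rewrite eqn_leq hab leqNgt hlt.
rewrite orbF => /eqP eba; subst a; rewrite P_rcons.
have hlt : forall y, y \in P w -> y < b.
  move=> y /P_mem yw; rewrite ltn_neqAle (allP hw y yw) andbT.
  by apply/negP => /eqP e; move: bw; rewrite -(val_inj e) yw.
case: (P w) hlt => [|h t] hlt /=; first by eexists.
have := hlt h (mem_head h t) => hb.
rewrite ltnNge (ltnW hb) /=.
case: eqP => [e|_]; last by eexists.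
by rewrite e ltnn in hb.
Qed.

Fixpoint NF n (b : nat) (w : seq 'I_n) : seq 'I_n :=
  match b with
  | 0 => [::]
  | b'.+1 => NF b' w ++ (if b' \in map val w then P (filter (fun y : 'I_n => y <= b') w) else [::])
  end.

Definition Kprop n (m : nat) := forall (b : 'I_n) (w : seq 'I_n), val b = m ->
  all (fun y : 'I_n => y <= b) w -> b \in w ->
  styl_cong w (filter (fun y : 'I_n => y < b) w ++ P w).

Lemma NF_filter n (b : nat) (w : seq 'I_n) k : k <= b ->
  NF k (filter (fun y : 'I_n => y < b) w) = NF k w.
Proof.
elim: k => [|k IH] hk //=.
rewrite IH ?(ltnW hk) //.
have -> : (k \in map val (filter (fun y : 'I_n => y < b) w)) = (k \in map val w).
  apply/idP/idP => /mapP[y].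
    by rewrite mem_filter => /andP[_ yw] ->; apply/mapP; exists y.
  move=> yw ek; apply/mapP; exists y => //; rewrite mem_filter yw andbT.
  by rewrite -ek.
rewrite -filter_predI; congr (_ ++ _); case: ifP => // _; congr P; apply: eq_filter => y /=.
case: (leqP y k) => hyk; rewrite ?andbF ?andbT //.
exact: leq_ltn_trans hyk hk.
Qed.

Lemma NF_absorb n (k : nat) (u : seq 'I_n) (x : 'I_n) : x \in u ->
  (forall c, x <= c -> c < k -> x \in P (filter (fun y : 'I_n => y <= c) u)) ->
  NF k (rcons u x) = NF k u.
Proof.
move=> xu; elim: k => [|k IH] H //=.
rewrite IH; last by move=> c h1 h2; apply: H => //; apply: ltnW.
have -> : (k \in map val (rcons u x)) = (k \in map val u).
  rewrite map_rcons mem_rcons inE; case: eqP => // ->.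
  by rewrite (map_f val xu).
congr (_ ++ _); case: ifP => // _.
rewrite filter_rcons; case: ifP => // hxk.
by rewrite P_rcons ins_id ?P_sorted // H.
Qed.

Lemma S_lemma n (b : nat) : (forall m, m < b -> Kprop n m) ->
  forall w : seq 'I_n, all (fun y : 'I_n => y < b) w -> styl_cong w (NF b w).
Proof.
elim: b => [|b IH] HK w hw /=.
  by case: w hw => [|y w] //=; reflexivity.
case: ifP => hb.
  case/mapP: hb => bo bow hbo.
  have hall : all (fun y : 'I_n => y <= bo) w.
    by apply/allP => y yw; rewrite -hbo -ltnS; exact: (allP hw y yw).
  apply: (styl_trans (HK b (ltnSn b) bo w (esym hbo) hall bow)) _.
  have hf : filter (fun y : 'I_n => y <= b) w = w.
    by apply/all_filterP; rewrite hbo.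
  rewrite hf; subst b; rewrite -(NF_filter w (leqnn bo)).
  apply: cat_mor; last by reflexivity.
  apply: IH.
    by move=> m hm; apply: HK; apply: ltnW.
  by rewrite all_filter; apply/allP => y _; apply/implyP.
rewrite cats0; apply: IH.
  by move=> m hm; apply: HK; apply: ltnW.
apply/allP => y yw; have := allP hw y yw; rewrite ltnS leq_eqVlt => /orP[/eqP e|//].
by move: hb; rewrite -e (map_f val yw).
Qed.

Lemma max_exists n (w : seq 'I_n) : w <> [::] ->
  exists2 m, m \in w & all (fun y : 'I_n => y <= m) w.
Proof.
elim: w => [|y w IH] // _.
case: w IH => [|z w] IH; first by exists y; rewrite /= ?inE ?eqxx ?leqnn.
case: IH => // m mw hm.
case: (leqP y m) => hym.
  by exists m; [rewrite inE mw orbT | rewrite /= hym].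
exists y; first by rewrite inE eqxx.
apply/allP => x; rewrite inE => /orP[/eqP->//|xw]; exact: leq_trans (allP hm x xw) (ltnW hym).
Qed.

Lemma K_all n m : Kprop n m.
Proof.
elim/ltn_ind: m => m IHm b w hb.
have Sb : forall w0 : seq 'I_n, all (fun y : 'I_n => y < b) w0 -> styl_cong w0 (NF b w0).
  by apply: S_lemma; rewrite hb.
have E : forall w0 : seq 'I_n, all (fun y : 'I_n => y < b) w0 -> w0 <> [::] ->
    exists X, styl_cong w0 (X ++ P w0).
  move=> w0 hw0 hne; case: (max_exists hne) => mo mow hmo.
  exists (filter (fun y : 'I_n => y < mo) w0).
  apply: (IHm mo) => //; rewrite -hb; exact: (allP hw0 mo mow).
elim/last_ind: w => [|w0 a IHw] //.
rewrite all_rcons mem_rcons inE => /andP[hab hw0].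
case bw0: (b \in w0) => /=; last rewrite orbF.
  move=> _.
  have IH := IHw hw0 bw0.
  case: (P_head hw0 bw0) => D hD.
  have hsD : sorted (@gtI n) (b :: D) by rewrite -hD P_sorted.
  rewrite filter_rcons P_rcons hD -cats1.
  apply: (styl_trans (cat_mor IH (styl_refl [:: a]))).
  rewrite hD -catA.
  case: (ltnP a b) => hlt.
    rewrite -hD.
    set u := filter (fun y : 'I_n => y < b) w0.
    have hsP := P_sorted w0.
    case: (split_lemma (P w0) a) => [hall|[H [x [T [hQ [hH hx]]]]]].
      have hi : ins (P w0) a = P w0 ++ [:: a] by rewrite -{1}[P w0]cats0 ins_cat.
      rewrite hi -cats1 -catA /=.
      apply: cat_mor; first by reflexivity.
      symmetry; exact: R1' hsP hall.
    have hs1 : sorted (@gtI n) (rcons H x) && path (@gtI n) x T by rewrite -sorted_cat_cons -hQ.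
    case/andP: hs1 => hs1 hpT.
    have hsH : sorted (@gtI n) H by move: hs1; rewrite -cats1 => /cat_sorted2 [].
    have hsT : sorted (@gtI n) T by case: T hpT {hQ} => //= ? ? /andP[].
    rewrite hQ ins_cat //= ltnNge hx /=.
    have L2 : forall y : 'I_n, all (fun h : 'I_n => y < h) H ->
        styl_cong (y :: H ++ y :: T) (H ++ y :: T).
      by move=> y hy; exact: R1' hsH hy.
    case: eqP => [eax|hne].
      subst x.
      have L1 : styl_cong ((H ++ a :: T) ++ [:: a]) (H ++ a :: T).
        rewrite -catA /=; apply: cat_mor; first by reflexivity.
        by have := R1 [::] hpT; rewrite cats0.
      rewrite L1 -cats1 -catA /= (L2 a hH); reflexivity.
    have hxa : x < a by rewrite ltn_neqAle hx andbT; apply/eqP => e; apply: hne; apply: val_inj.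
    have L3 : styl_cong ((H ++ x :: T) ++ [:: a]) (x :: H ++ a :: T).
      rewrite -catA /=.
      have := R2 [::] hpT hxa; rewrite cats0 => ->.
      exact: R3 hsH hH hxa.
    have xP : x \in P w0 by rewrite hQ mem_cat mem_head orbT.
    have hxb : x < b := leq_ltn_trans hx hlt.
    have absorb : styl_cong (rcons u x) u.
      have hu : all (fun y : 'I_n => y < b) u by rewrite all_filter; apply/allP => y _; apply/implyP.
      apply: (styl_trans (Sb (rcons u x) _)); first by rewrite all_rcons hxb.
      rewrite NF_absorb; first by symmetry; apply: Sb.
        by rewrite mem_filter hxb (P_mem xP).
      move=> c hxc hcb.
      have -> : filter (fun y : 'I_n => y <= c) u = filter (fun y : 'I_n => y <= c) w0.
        rewrite /u -filter_predI; apply: eq_filter => y /=.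
        case: (leqP y c) => hyc; rewrite ?andbF ?andbT //.
        exact: leq_ltn_trans hyc hcb.
      exact: C1 xP hxc.
    rewrite L3 -cats1 -catA /= -cat_rcons absorb (L2 a hH); reflexivity.
  have eab : a = b by apply: val_inj; apply/eqP; rewrite eqn_leq hab hlt.
  subst a; rewrite /= ltnn eqxx.
  apply: cat_mor; first by reflexivity.
  by have := R1 [::] hsD; rewrite cats0.
move=> /eqP eba; subst a.
have hw0lt : all (fun y : 'I_n => y < b) w0.
  apply/allP => y yw; rewrite ltn_neqAle (allP hw0 y yw) andbT.
  by apply/negP => /eqP e; move: bw0; rewrite -(val_inj e) yw.
rewrite filter_rcons ltnn (all_filterP hw0lt) P_rcons.
case hP: (P w0) => [|h t].
  by rewrite /= cats1; reflexivity.
have hne : w0 <> [::] by move=> e; rewrite e in hP.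
case: (E w0 hw0lt hne) => X HX.
have hhP : h \in P w0 by rewrite hP mem_head.
have hhb : h < b := allP hw0lt h (P_mem hhP).
have hpt : path (@gtI n) h t by have := P_sorted w0; rewrite hP.
have hst : sorted (@gtI n) t by case: t hpt {hP hhP} => //= ? ? /andP[].
rewrite /= ltnNge (ltnW hhb) /=.
case: eqP => [e|_]; first by rewrite e ltnn in hhb.
have HX' : styl_cong w0 (X ++ h :: t) by rewrite -hP.
rewrite -cats1 HX' -!catA.
apply: cat_mor; first by reflexivity.
rewrite /= (R2 [::] hpt hhb) (R2 t hpt hhb) cats0.
have := DD [::] hst; rewrite !cats0 => ->; reflexivity.
Qed.

Lemma nth_le_head n (h : 'I_n) (t : seq 'I_n) i : all (fun y : 'I_n => y < h) t ->
  nth 0 (map val t) i <= h.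
Proof.
elim: t i => [|y t IH] [|i] //= /andP[hy ht]; [exact: ltnW | exact: IH].
Qed.

Lemma IL n (Q : seq 'I_n) (a : 'I_n) l x : sorted (@gtI n) Q ->
  (l < size (ins Q a)) && (x <= nth 0 (map val (ins Q a)) l) =
  ((l < size Q) && (x <= nth 0 (map val Q) l)) ||
  ((x <= a) && (match l with 0 => true | l'.+1 => (l' < size Q) && (a < nth 0 (map val Q) l') end)).
Proof.
elim: Q l => [|h t IH] l.
  by case: l => [|l] //=; rewrite ?andbT ?orbF ?andbF.
rewrite sorted_consE => /andP[ha hs] /=.
case: ifPn => hah.
  case: l => [|l] /=.
    case: (leqP x h) => hxh //=; rewrite andbT; apply/esym/negbTE; rewrite -ltnNge.
    exact: ltn_trans hah hxh.
  rewrite (IH l hs); congr (_ || _); case: l => [|l] //=.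
  by rewrite hah andbT.
case: ifPn => heq.
  move/eqP: heq => ->; case: l => [|l] /=.
    by case: (x <= h); rewrite ?orbb.
  case: (l < (size t).+1) => //=; last by rewrite andbF orbF.
  rewrite [_ && (_ < _)](_ : _ = false) ?andbF ?orbF //.
  apply/negbTE; apply/negP => /andP[_]; apply/negP; rewrite -leqNgt.
  case: l => [|l] //=; exact: nth_le_head.
rewrite -leqNgt in hah.
have hha : h < a by rewrite ltn_neqAle hah andbT; move: heq; rewrite eq_sym.
case: l => [|l] /=.
  case: (leqP x a) => hxa; rewrite ?orbT ?orbF ?andbF //=.
  by apply/esym/negbTE; rewrite -ltnNge; exact: ltn_trans hha hxa.
rewrite [_ && (_ < _)](_ : _ = false) ?andbF ?orbF //.
apply/negbTE; apply/negP => /andP[_]; apply/negP; rewrite -leqNgt.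
apply: ltnW; apply: leq_ltn_trans _ hha.
case: l => [|l] //=; exact: nth_le_head.
Qed.

Definition Dp n (w : seq 'I_n) (l x : nat) : Prop :=
  exists d : seq 'I_n, [/\ size d = l.+1, sorted (@gtI n) d, all (fun y : 'I_n => x <= y) d & subseq d w].

Lemma subseq_rcons_inv (T : eqType) (d w : seq T) a : subseq d (rcons w a) ->
  subseq d w \/ exists d', d = rcons d' a /\ subseq d' w.
Proof.
rewrite -subseq_rev rev_rcons.
case hd: (rev d) => [|x s] /=.
  by move=> _; left; move/(congr1 rev): hd; rewrite revK => ->; apply: sub0seq.
case: eqP => [exa|_] h.
  right; exists (rev s); split; last by rewrite -subseq_rev revK.
  by rewrite -rev_cons -exa -hd revK.
by left; rewrite -subseq_rev hd.
Qed.

Lemma sorted_rcons_inv n (d : seq 'I_n) (a : 'I_n) : sorted (@gtI n) (rcons d a) ->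
  sorted (@gtI n) d /\ all (fun y : 'I_n => a < y) d.
Proof.
rewrite (sorted_pairwise (@gtI_trans n)) -cats1 pairwise_cat allrel1r => /and3P[h1 h2 _].
by split => //; rewrite (sorted_pairwise (@gtI_trans n)).
Qed.

Lemma sorted_rcons n (d : seq 'I_n) (a : 'I_n) : sorted (@gtI n) d -> all (fun y : 'I_n => a < y) d ->
  sorted (@gtI n) (rcons d a).
Proof.
rewrite !(sorted_pairwise (@gtI_trans n)) -cats1 pairwise_cat allrel1r => h1 h2.
by rewrite h1 h2.
Qed.

Lemma Dp_rcons n (w : seq 'I_n) (a : 'I_n) l x :
  Dp (rcons w a) l x <-> Dp w l x \/ (x <= a /\ match l with 0 => True | l'.+1 => Dp w l' a.+1 end).
Proof.
split.
  case=> d [hsz hs hall hsub]; case: (subseq_rcons_inv hsub) => [h|[d' [hd hsub']]].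
    by left; exists d.
  subst d; right.
  have [hs' ha'] := sorted_rcons_inv hs.
  split; first by move: hall; rewrite all_rcons => /andP[].
  case: l hsz => [|l] hsz //.
  exists d'; split => //; first by move: hsz; rewrite size_rcons => -[].
case=> [[d [hsz hs hall hsub]]|[hxa hl]].
  exists d; split => //; apply: subseq_trans hsub (subseq_rcons _ _).
case: l hl => [_|l [d [hsz hs hall hsub]]].
  exists [:: a]; split => //=; first by rewrite hxa.
  by rewrite sub1seq mem_rcons mem_head.
exists (rcons d a); split.
- by rewrite size_rcons hsz.
- by apply: sorted_rcons.
- rewrite all_rcons hxa /=; apply/allP => y yd; apply: leq_trans hxa _.
  exact: ltnW (allP hall y yd).
- by rewrite -!cats1; apply: cat_subseq => //; apply: subseq_refl.
Qed.

Lemma Char n (w : seq 'I_n) l x :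
  (l < size (P w)) && (x <= nth 0 (map val (P w)) l) <-> Dp w l x.
Proof.
elim/last_ind: w l x => [|w a IH] l x.
  split => //=; case=> d [hsz _ _ hsub].
  by move: hsub; case: d hsz.
rewrite P_rcons IL ?P_sorted // Dp_rcons.
split.
  case/orP=> [/IH h|/andP[hxa hl]]; first by left.
  right; split => //; case: l hl => // l hl; exact/IH.
case=> [/IH->//|[hxa hl]]; apply/orP; right; rewrite hxa /=.
case: l hl => // l hl; exact/IH.
Qed.

Lemma size_P n (w : seq 'I_n) : size (P w) <= n.
Proof.
have hu : uniq (P w).
  apply: (sorted_uniq (@gtI_trans n)) (P_sorted w).
  by move=> y; rewrite /gtI ltnn.
have := @uniq_leq_size _ (P w) (enum 'I_n) hu (fun y _ => mem_enum _ y).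
by rewrite size_enum_ord.
Qed.

Lemma P_eq n (v v' : seq 'I_n) :
  (forall d : seq 'I_n, size d <= n -> subseq d v = subseq d v') -> P v = P v'.
Proof.
move=> H.
have HD : forall l x, l < n -> Dp v l x <-> Dp v' l x.
  move=> l x hl; split; case=> d [h1 h2 h3 h4]; exists d; split => //.
    by rewrite -H // h1.
  by rewrite H // h1.
have hs : forall l, l < n -> (l < size (P v)) = (l < size (P v')).
  have c0 : forall (w : seq 'I_n) l, l < size (P w) -> Dp w l 0.
    by move=> w l0 h; apply: (proj1 (Char w l0 0)); rewrite h leq0n.
  have c1 : forall (w : seq 'I_n) l, Dp w l 0 -> l < size (P w).
    by move=> w l0 /(proj2 (Char w l0 0)) /andP[].
  move=> l hl; apply/idP/idP => h.
    by apply: c1; apply/HD => //; apply: c0.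
  by apply: c1; apply/HD => //; apply: c0.
have hsz : size (P v) = size (P v').
  apply/eqP; rewrite eqn_leq; apply/andP; split; rewrite leqNgt; apply/negP => h.
    by have := hs _ (leq_trans h (size_P v)); rewrite h ltnn.
  by have := hs _ (leq_trans h (size_P v')); rewrite h ltnn.
apply: (inj_map val_inj); apply: (@eq_from_nth _ 0); first by rewrite !size_map.
move=> l; rewrite size_map => hl.
have hln : l < n := leq_trans hl (size_P v).
have hl' : l < size (P v') by rewrite -hsz.
apply/eqP; rewrite eqn_leq; apply/andP; split; last first.
  have : Dp v' l (nth 0 (map val (P v')) l) by apply: (proj1 (Char _ _ _)); rewrite hl' leqnn.
  by move/(proj2 (HD _ _ hln))/(proj2 (Char _ _ _))/andP=> [].
have : Dp v l (nth 0 (map val (P v)) l) by apply: (proj1 (Char _ _ _)); rewrite hl leqnn.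
by move/(proj1 (HD _ _ hln))/(proj2 (Char _ _ _))/andP=> [].
Qed.

Lemma NF_eq n (v v' : seq 'I_n) :
  (forall d : seq 'I_n, size d <= n -> subseq d v = subseq d v') ->
  forall k, k <= n -> NF k v = NF k v'.
Proof.
move=> H; elim=> [|k IH] hk //=.
rewrite IH ?(ltnW hk) //.
have -> : (k \in map val v) = (k \in map val v').
  have e : forall s : seq 'I_n, (k \in map val s) = (Ordinal hk \in s).
    move=> s; apply/mapP/idP => [[y ys ek]|hs].
      by have -> : Ordinal hk = y by apply: val_inj; rewrite /= ek.
    by exists (Ordinal hk).
  rewrite !e -!sub1seq H //=; exact: leq_ltn_trans (leq0n k) hk.
congr (_ ++ _); case: ifP => // _; apply: P_eq => d hd.
by rewrite !subseq_filter H.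
Qed.

Lemma core n (v v' : seq 'I_n) :
  (forall d : seq 'I_n, size d <= n -> subseq d v = subseq d v') -> styl_cong v v'.
Proof.
move=> H.
have hall : forall s : seq 'I_n, all (fun y : 'I_n => y < n) s by move=> s; apply/allP => y _; exact: ltn_ord.
have S := @S_lemma n n (fun m _ => @K_all n m).
apply: (styl_trans (S v (hall v))).
rewrite (NF_eq H (leqnn n)); apply: styl_sym; exact: S.
Qed.

Definition stp n (t : nat) (x : 'I_n) : nat := if (nat_of_ord x).+1 == t then nat_of_ord x else t.

Ltac ifs := repeat (match goal with |- context [if ?c then _ else _] =>
  lazymatch c with context [if _ then _ else _] => fail | _ =>
    let E := fresh "E" in case E: c; move/eqP: E => E end end; simpl).

Lemma stp_rel n (l r : seq 'I_n) : styl_rel l r -> forall t, foldl (@stp n) t l = foldl (@stp n) t r.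
Proof.
case=> [[i [-> ->]]|[[i [j [k [/andP[h1 h2] [[-> ->]|[-> ->]]]]]]|[i [j [h1 [[-> ->]|[-> ->]]]]]]] t /=;
rewrite /stp; ifs; lia.
Qed.

Lemma stp_cong n (s s' : seq 'I_n) : styl_cong s s' -> forall t, foldl (@stp n) t s = foldl (@stp n) t s'.
Proof.
elim=> [u v l r H|w|w w' _ IH|w1 w2 w3 _ IH1 _ IH2] t.
- by rewrite !foldl_cat (stp_rel H).
- by [].
- by rewrite IH.
- by rewrite IH1 IH2.
Qed.

Lemma blockG n (Pv : pred nat) m r t : m + r <= n.+1 ->
  foldl (@stp n.+1) t (map inord (filter Pv (iota m r))) =
  if [&& 0 < t, m <= t.-1, t.-1 < m + r & Pv t.-1] then t.-1 else t.
Proof.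
elim: r m t => [|r IH] m t hmr /=.
  by case: t => [|t] //=; rewrite addn0; case: (leqP m t) => h //=; rewrite ltnNge h.
have hm : m < n.+1 by rewrite addnS in hmr; exact: leq_ltn_trans (leq_addr _ _) hmr.
have hmr' : m.+1 + r <= n.+1 by rewrite addSn -addnS.
case hPm: (Pv m) => /=.
  rewrite /stp inordK //.
  case: eqP => [et|net].
    rewrite IH //; subst t => /=.
    have -> : (m < m.-1) = false by apply/negbTE; rewrite -leqNgt leq_pred.
    by rewrite !andbF /= leqnn addnS ltnS leq_addr hPm.
  rewrite IH //; case: t net => [|t] net //=.
  have -> : (m.+1 <= t) = (m <= t) by rewrite ltn_neqAle; case: eqP => // e; exfalso; apply: net; rewrite e.
  by rewrite addSn addnS.
rewrite IH //; case: t => [|t] //=.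
case: (ltngtP m t) => h //=; first by rewrite addSn addnS.
by subst t; rewrite hPm !andbF.
Qed.

Definition phi (X : eqType) n (u : seq X) (x : X) : seq 'I_n.+1 :=
  map inord (filter (fun v => nth x u ((size u).-1 - v) == x) (iota 0 (size u))).

Definition G (X : eqType) (u : seq X) (p : nat) (w : seq X) : nat :=
  foldl (fun p x => if (p < size u) && (nth x u p == x) then p.+1 else p) p w.

Lemma G_le (X : eqType) (u w : seq X) p : p <= size u -> G u p w <= size u.
Proof.
elim: w p => [|x w IH] p hp //=; apply: IH.
by case: ifP => // /andP[].
Qed.

Lemma G_cons (X : eqType) (u : seq X) p x w :
  G u p (x :: w) = G u (if (p < size u) && (nth x u p == x) then p.+1 else p) w.
Proof. by []. Qed.

Lemma sub_G (X : eqType) (u w : seq X) p : p <= size u -> subseq (drop p u) w = (G u p w == size u).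
Proof.
elim: w p => [|x w IH] p hp.
  by rewrite /= -size_eq0 size_drop subn_eq0 eqn_leq hp.
rewrite G_cons; case: (ltnP p (size u)) => h.
  rewrite {1}(drop_nth x h) /=.
  case: eqP => _; first exact: IH.
  by rewrite -(drop_nth x h) IH.
rewrite (drop_oversize h) sub0seq /=.
suff -> : G u p w = p by rewrite eq_sym eqn_leq hp h.
by elim: w {IH} => //= y w IHw; rewrite ltnNge h.
Qed.

Lemma block n (X : eqType) (u : seq X) (x : X) p : size u <= n.+1 -> p <= size u ->
  foldl (@stp n.+1) (size u - p) (phi n u x) =
  size u - (if (p < size u) && (nth x u p == x) then p.+1 else p).
Proof.
move=> hk hp; rewrite /phi blockG //= add0n.
case: (ltnP p (size u)) => hpk /=.
  have e : (size u - p).-1 = (size u).-1 - p by rewrite -subn1 -subnDA addnC subnDA subn1.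
  have -> : 0 < size u - p by rewrite subn_gt0.
  have -> : (size u - p).-1 < size u by rewrite e; apply: leq_ltn_trans (leq_subr _ _) _; rewrite prednK //; exact: leq_ltn_trans (leq0n p) hpk.
  have -> : (size u).-1 - (size u - p).-1 = p by rewrite e subKn //; rewrite -ltnS prednK //; exact: leq_ltn_trans (leq0n p) hpk.
  case: eqP => _ //=.
  by rewrite subnS.
have -> : size u - p = 0 by apply/eqP; rewrite subn_eq0.
by [].
Qed.

Lemma aut n (X : eqType) (u w : seq X) p : size u <= n.+1 -> p <= size u ->
  foldl (@stp n.+1) (size u - p) (flatten (map (phi n u) w)) = size u - G u p w.
Proof.
move=> hk; elim: w p => [|x w IH] p hp; first by [].
rewrite G_cons [flatten _]/= foldl_cat block //; apply: IH.
by case: ifP => // /andP[].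
Qed.

Lemma dir1 n (X : eqType) (w w' : seq X) : holds_in_styl n.+1 w w' -> same_subwords_upto n.+1 w w'.
Proof.
move=> H u hu.
have := stp_cong (H (phi n u)) (size u).
rewrite -{1}(subn0 (size u)) -{2}(subn0 (size u)) !aut //.
move=> e.
have e' : G u 0 w = G u 0 w'.
  have h1 := G_le w (leq0n (size u)); have h2 := G_le w' (leq0n (size u)); lia.
by rewrite -(drop0 u) !sub_G // e'.
Qed.

Lemma subseq_flatten (X : eqType) n (phi0 : X -> seq 'I_n) (u w : seq X) :
  subseq u w -> subseq (flatten (map phi0 u)) (flatten (map phi0 w)).
Proof.
elim: w u => [|x w IH] u /=; first by move/eqP->.
case: u => [|y u] /=; first by move=> _; apply: sub0seq.
case: eqP => [->|_] h.
  by apply: cat_subseq; [apply: subseq_refl | apply: (IH u)].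
apply: subseq_trans (IH _ h) (suffix_subseq _ _).
Qed.

Lemma subseq_cat_split (T : eqType) (d s1 s2 : seq T) : subseq d (s1 ++ s2) ->
  exists d1 d2, [/\ d = d1 ++ d2, subseq d1 s1 & subseq d2 s2].
Proof.
elim: s1 d => [|y s1 IH] d /=; first by move=> h; exists [::], d.
case: d => [|z d] /=; first by move=> _; exists [::], [::]; rewrite !sub0seq.
case: eqP => [->|_] h.
  case: (IH d h) => d1 [d2 [-> h1 h2]]; exists (y :: d1), d2; split => //=.
  by rewrite eqxx.
case: (IH _ h) => d1 [d2 [e h1 h2]]; exists d1, d2; split => //.
apply: subseq_trans h1 (subseq_cons _ _).
Qed.

Lemma FL (X : eqType) n (phi0 : X -> seq 'I_n) (w : seq X) (d : seq 'I_n) :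
  subseq d (flatten (map phi0 w)) ->
  exists u, [/\ size u <= size d, subseq u w & subseq d (flatten (map phi0 u))].
Proof.
elim: w d => [|x w IH] d /=.
  by move=> h; exists [::]; split => //=; move: h; rewrite subseq0 => /eqP ->.
case/subseq_cat_split => d1 [d2 [-> h1 h2]].
case: (IH _ h2) => u [hs hu hd].
case: d1 h1 => [|z d1] h1.
  exists u; split => //; apply: subseq_trans hu (subseq_cons _ _).
exists (x :: u); split => //=.
- rewrite size_cat /= ltnS; apply: leq_trans hs (leq_addl _ _).
- by rewrite eqxx.
- by rewrite [flatten _]/=; apply: (@cat_subseq _ (z :: d1) d2).
Qed.

Lemma dir2 n (X : eqType) (w w' : seq X) : same_subwords_upto n w w' -> holds_in_styl n w w'.
Proof.
move=> H phi0; apply: core => d hd.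
have key : forall a b : seq X, same_subwords_upto n a b ->
    subseq d (flatten (map phi0 a)) -> subseq d (flatten (map phi0 b)).
  move=> a b Hab /FL [u [hs hu hdu]].
  apply: subseq_trans hdu (subseq_flatten _ _).
  by rewrite -Hab // (leq_trans hs hd).
apply/idP/idP; apply: key => // u hu; exact/esym/H.
Qed.

Unset Implicit Arguments.

Theorem corollary1 (n : nat) (hn : 2 <= n) (X : eqType) (w w' : seq X) :
  holds_in_styl n w w' <-> same_subwords_upto n w w'.
Proof.
split; last exact: dir2.
case: n hn => [|n] hn; first by [].
exact: dir1.
Qed.
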